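(* Let $\beta>0$, $k_d>0$, $N$ constant and $t>0$. Let $(x,y)=r(\cos\phi,\sin\phi)$ with $r>0$, and set $\alpha=\beta rt$ and $\gamma=\cos(\phi/2)$. Let $$\psi_G=-\frac{N}{2\pi}\int_0^\infty\frac{k}{k^2+k_d^2}J_0\!\left(\left[\left(kx+\frac{\beta kt}{k^2+k_d^2}\right)^2+k^2y^2\right]^{1/2}\right)dk.$$ For $z\ge0$ define $$\delta_1(z)=1-\frac{k_d^2r^2}{\alpha(\sqrt{z^2+1}-z)^2},\qquad \delta_2(z)=1-\frac{k_d^2r^2}{\alpha(\sqrt{z^2+1}+z)^2},$$ and $$A_j(z)=\left[4\alpha\,\delta_j(z)\,(z^2+\gamma^2)\right]^{1/2},\qquad j=1,2.$$ (i) Near region, $r<\beta t/k_d^2$. Set $z_{01}=(\alpha-k_d^2r^2)/(\sqrt{4\alpha}\,k_dr)>0$. Then $$\psi_G=-\frac{N}{2\pi}\left(\int_0^{z_{01}}\frac{J_0(A_1(z))}{\sqrt{z^2+1}}dz+\int_0^{\infty}\frac{J_0(A_2(z))}{\sqrt{z^2+1}}dz\right)=-\frac{N}{2\pi}\int_{-z_{01}}^\infty\frac{J_0(A_2(z))}{\sqrt{z^2+1}}dz,$$ where in the last integral $\delta_2$ and $A_2$ are given by the same formulas for negative $z$. (ii) Far region, $r>\beta t/k_d^2$. Set $z_{02}=(k_d^2r^2-\alpha)/(\sqrt{4\alpha}\,k_dr)>0$. Then $$\psi_G=-\frac{N}{2\pi}\int_{z_{02}}^\infty\frac{J_0(A_2(z))}{\sqrt{z^2+1}}dz.$$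 In both cases the change of variables is $z=|(k^2+k_d^2)r^2-\alpha|/(2\sqrt{\alpha(k^2+k_d^2)r^2})$. Its inverse is $(k^2+k_d^2)r^2=\alpha(\sqrt{z^2+1}\mp z)^2$, with the minus sign for $k^2<\beta t/r-k_d^2$ and the plus sign otherwise.
   Context: $J_0$ is the Bessel function of the first kind of order zero. $\psi_G$ is the no-wind Rossby wave Green's function with inverse deformation radius $k_d$. *)

(* Defs.v *)
From Stdlib Require Import Arith Reals Lra ClassicalEpsilon.
Open Scope R_scope.

Definition J0_term (x : R) (m : nat) : R :=
  (-1) ^ m / (INR (fact m)) ^ 2 * (x / 2) ^ (2 * m).

Definition J0 (x : R) : R :=
  epsilon (inhabits 0) (fun l => infinite_sum (J0_term x) l).

Definition improper_int (f : R -> R) (a l : R) : Prop :=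
  (forall b, a <= b -> inhabited (Riemann_integrable f a b)) /\
  (forall eps, 0 < eps -> exists M, forall b (pr : Riemann_integrable f a b),
      a <= b -> M <= b -> Rabs (RiemannInt pr - l) < eps).

Definition psiG_integrand (beta kd t x y : R) (k : R) : R :=
  k / (k ^ 2 + kd ^ 2) *
  J0 (sqrt ((k * x + beta * k * t / (k ^ 2 + kd ^ 2)) ^ 2 + k ^ 2 * y ^ 2)).

Definition psiG_value (beta kd N t x y v : R) : Prop :=
  exists I, improper_int (psiG_integrand beta kd t x y) 0 I /\
            v = - (N / (2 * PI)) * I.

Definition delta1 (alpha kd r z : R) : R :=
  1 - kd ^ 2 * r ^ 2 / (alpha * (sqrt (z ^ 2 + 1) - z) ^ 2).
Definition delta2 (alpha kd r z : R) : R :=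
  1 - kd ^ 2 * r ^ 2 / (alpha * (sqrt (z ^ 2 + 1) + z) ^ 2).

Definition A_1 (alpha kd r gamma z : R) : R :=
  sqrt (4 * alpha * delta1 alpha kd r z * (z ^ 2 + gamma ^ 2)).
Definition A_2 (alpha kd r gamma z : R) : R :=
  sqrt (4 * alpha * delta2 alpha kd r z * (z ^ 2 + gamma ^ 2)).

(* Main.v *)
Require Import Defs.
From Stdlib Require Import Reals.
Local Open Scope R_scope.
Open Scope R_scope.
From Coquelicot Require Import Coquelicot.
From Stdlib Require Import Reals Lra Lia Psatz ClassicalEpsilon.


Definition ca (m : nat) : R := (-1) ^ m / (INR (Factorial.fact m)) ^ 2 / 4 ^ m.
Definition S0 (y : R) : R := PSeries ca y.

Lemma ca_S n : ca (S n) = - ca n / (4 * (INR (S n))^2).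
Proof.
  unfold ca. rewrite fact_simpl, mult_INR. change ((-1)^(S n)) with (-1 * (-1)^n). change (4^(S n)) with (4*4^n).
  assert (INR (Factorial.fact n) <> 0) by (apply not_0_INR; apply Factorial.fact_neq_0).
  assert (INR (S n) <> 0) by (apply not_0_INR; lia).
  field. split; auto. split; auto. apply pow_nonzero. lra.
Qed.

Lemma ca_neq n : ca n <> 0.
Proof.
  unfold ca. assert (INR (Factorial.fact n) <> 0) by (apply not_0_INR; apply Factorial.fact_neq_0).
  apply Rmult_integral_contrapositive_currified.
  apply Rmult_integral_contrapositive_currified.
  apply pow_nonzero; lra. apply Rinv_neq_0_compat, pow_nonzero; auto.
  apply Rinv_neq_0_compat, pow_nonzero; lra.
Qed.

Lemma ca_rad : CV_radius ca = p_infty.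
Proof.
  apply CV_radius_infinite_DAlembert. apply ca_neq.
  apply is_lim_seq_ext with (fun n => / (4 * (INR (S n))^2)).
  - intro n. rewrite ca_S. assert (Hc := ca_neq n).
    assert (INR (S n) <> 0) by (apply not_0_INR; lia).
    replace (- ca n / (4 * INR (S n) ^ 2) / ca n) with (- / (4 * INR (S n) ^ 2)) by (field; auto).
    rewrite Rabs_Ropp, Rabs_right. auto. apply Rle_ge, Rlt_le, Rinv_0_lt_compat.
    apply Rmult_lt_0_compat. lra. apply pow_lt. apply lt_0_INR; lia.
  - replace (Finite 0) with (Rbar_inv p_infty) by reflexivity.
    apply is_lim_seq_inv; [|discriminate].
    replace p_infty with (Rbar_mult 4 p_infty) by (simpl; destruct (Rle_dec 0 4); [destruct (Rle_lt_or_eq_dec 0 4 r)|]; try reflexivity; lra).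
    apply is_lim_seq_scal_l.
    apply is_lim_seq_le_p_loc with (fun n => INR n).
    + exists 0%nat. intros n _. assert (H1 : 1 <= INR (S n)) by (apply (le_INR 1); lia).
      rewrite S_INR in *. nra.
    + apply is_lim_seq_INR.
Qed.

Lemma ca_ex y : ex_pseries ca y.
Proof. apply CV_radius_inside. rewrite ca_rad. simpl. auto. Qed.

Lemma J0_eq x : J0 x = S0 (x ^ 2).
Proof.
  assert (H : infinite_sum (J0_term x) (S0 (x^2))).
  { apply is_series_Reals. apply is_series_ext with (fun k => scal (pow_n (x^2) k) (ca k)).
    - intro n. unfold J0_term, ca, scal; simpl. unfold mult; simpl.
      rewrite pow_n_pow. replace (n + (n+0))%nat with (2*n)%nat by lia. rewrite pow_mult.
      replace ((x/2)^2) with (x*(x*1) * /4) by field. rewrite (Rpow_mult_distr (x*(x*1)) (/4) n). rewrite <- Rinv_pow by lra.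
      assert (INR (Factorial.fact n) <> 0) by (apply not_0_INR; apply Factorial.fact_neq_0).
      field. split; auto. apply pow_nonzero; lra.
    - apply PSeries_correct, ca_ex. }
  unfold J0. apply uniqueness_sum with (J0_term x); auto.
  apply epsilon_spec. exists (S0 (x^2)); auto.
Qed.


Definition S1 (y : R) : R := PSeries (PS_derive ca) y.
Definition S2 (y : R) : R := PSeries (PS_derive (PS_derive ca)) y.

Lemma rad1 : CV_radius (PS_derive ca) = p_infty.
Proof. rewrite CV_radius_derive; apply ca_rad. Qed.
Lemma rad2 : CV_radius (PS_derive (PS_derive ca)) = p_infty.
Proof. rewrite !CV_radius_derive; apply ca_rad. Qed.

Lemma dS0 y : is_derive S0 y (S1 y).
Proof. apply is_derive_PSeries. rewrite ca_rad; simpl; auto. Qed.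
Lemma dS1 y : is_derive S1 y (S2 y).
Proof. apply is_derive_PSeries. rewrite rad1; simpl; auto. Qed.

Lemma ode y : 4 * y * S2 y + 4 * S1 y + S0 y = 0.
Proof.
  unfold S0, S1, S2.
  rewrite Rmult_assoc, <- PSeries_incr_1, <- !PSeries_scal.
  assert (E1 : ex_pseries (PS_scal 4 (PS_incr_1 (PS_derive (PS_derive ca)))) y).
  { apply CV_radius_inside. rewrite CV_radius_scal by lra. rewrite CV_radius_incr_1, rad2. simpl; auto. }
  assert (E2 : ex_pseries (PS_scal 4 (PS_derive ca)) y).
  { apply CV_radius_inside. rewrite CV_radius_scal by lra. rewrite rad1. simpl; auto. }
  rewrite <- PSeries_plus by auto.
  rewrite <- PSeries_plus; [| | apply ca_ex].
  2:{ apply ex_pseries_plus; auto. }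
  rewrite <- (PSeries_const_0 y). apply PSeries_ext.
  intro n. unfold PS_plus, PS_scal, PS_derive, PS_incr_1, plus, scal; simpl; unfold mult; simpl.
  destruct n as [|m].
  - rewrite ca_S. unfold zero; simpl. unfold ca. simpl. field.
  - rewrite (ca_S (S m)). rewrite ca_S. 
    assert (INR (S m) <> 0) by (apply not_0_INR; lia).
    assert (INR (S (S m)) <> 0) by (apply not_0_INR; lia).
    change (match m with | 0%nat => 1 | S _ => INR m + 1 end) with (INR (S m)).
    rewrite !S_INR in *. field. split; auto.
Qed.

Definition pJ (x : R) := S0 (x ^ 2).
Definition qJ (x : R) := 2 * x * S1 (x ^ 2).

Lemma dpJ x : is_derive pJ x (qJ x).
Proof.
  unfold pJ, qJ. apply is_derive_ext with (fun x => S0 (x^2)); auto.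
  evar (d : R). replace (2 * x * S1 (x^2)) with d.
  apply (is_derive_comp S0 (fun x => x^2)). apply dS0.
  auto_derive; auto. subst d. simpl. unfold scal; simpl; unfold mult; simpl. ring.
Qed.

Lemma dqJ x : is_derive qJ x (- 2 * S1 (x^2) - S0 (x^2)).
Proof.
  unfold qJ.
  assert (H : is_derive (fun x => S1 (x^2)) x (2 * x * S2 (x^2))).
  { evar (d : R). replace (2 * x * S2 (x^2)) with d.
    apply (is_derive_comp S1 (fun x => x^2)). apply dS1.
    auto_derive; auto. subst d. simpl. unfold scal; simpl; unfold mult; simpl. ring. }
  apply is_derive_Reals in H.
  apply is_derive_Reals.
  assert (H2 := derivable_pt_lim_mult (fun x => 2 * x) (fun x => S1 (x^2)) x 2 _ ltac:(apply is_derive_Reals; auto_derive; auto; ring) H).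
  simpl in H2. 
  replace (- 2 * S1 (x^2) - S0 (x^2)) with (2 * S1 (x ^ 2) + 2 * x * (2 * x * S2 (x ^ 2))).
  apply H2. pose proof (ode (x^2)). simpl in *. lra.
Qed.

Lemma dqJ' x : x <> 0 -> - 2 * S1 (x^2) - S0 (x^2) = - qJ x / x - pJ x.
Proof. intro. unfold qJ, pJ. field. auto. Qed.

Lemma J0_pJ x : J0 x = pJ x.
Proof. apply J0_eq. Qed.


Section Decay.
Variables p q dq : R -> R.
Hypothesis Hp : forall x, is_derive p x (q x).
Hypothesis Hq : forall x, is_derive q x (dq x).
Hypothesis Hode : forall x, 0 < x -> dq x = - q x / x - p x.

Definition En x := x * p x ^ 2 + p x ^ 2 / (2 * x) + p x * q x + x * q x ^ 2.

Lemma dEn x : 0 < x -> is_derive En x (- p x ^ 2 / (2 * x ^ 2)).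
Proof.
  intro hx. unfold En.
  assert (Dp : Derive p x = q x) by (apply is_derive_unique; auto).
  assert (Dq : Derive q x = dq x) by (apply is_derive_unique; auto).
  auto_derive.
  - repeat split; try (eexists; apply Hp); try (eexists; apply Hq); lra.
  - replace (Derive (fun x0 : R => p x0) x) with (q x) by (symmetry; apply is_derive_unique; auto).
    replace (Derive (fun x0 : R => q x0) x) with (dq x) by (symmetry; apply is_derive_unique; auto).
    rewrite Hode by auto. field. lra.
Qed.

Lemma En_decr x : 1 <= x -> En x <= En 1.
Proof.
  intro hx. destruct (Req_dec x 1) as [->|hne]; [lra|].
  destruct (MVT_gen En 1 x (fun c => - p c ^ 2 / (2 * c ^ 2))) as [c [hc E]].
  - intros y hy. rewrite Rmin_left, Rmax_right in hy by lra. apply dEn. lra.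
  - intros y hy. rewrite Rmin_left, Rmax_right in hy by lra.
    apply derivable_continuous_pt. eexists. apply is_derive_Reals, dEn; lra.
  - rewrite Rmin_left, Rmax_right in hc by lra.
    assert (- p c ^ 2 / (2 * c ^ 2) <= 0).
    { assert (0 <= p c ^ 2 / (2 * c ^ 2)). apply Rmult_le_pos. nra. apply Rlt_le, Rinv_0_lt_compat. nra.
      unfold Rdiv in *. lra. }
    nra.
Qed.

Lemma decay : exists C, 0 <= C /\ forall x, 1 <= x -> x * p x ^ 2 <= C.
Proof.
  exists (En 1). split.
  - unfold En. replace (p 1 ^ 2 / (2 * 1)) with (p 1 ^ 2 / 2) by field.
    assert (0 <= (p 1 + q 1)^2) by apply pow2_ge_0. assert (0 <= p 1 ^ 2) by apply pow2_ge_0. assert (0 <= q 1 ^ 2) by apply pow2_ge_0. nra.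
  - intros x hx. apply Rle_trans with (En x); [|apply En_decr; auto].
    unfold En. assert (0 <= ((p x + x * q x)^2 + x^2 * q x ^ 2) / (2 * x)).
    { apply Rmult_le_pos. apply Rplus_le_le_0_compat. apply pow2_ge_0. apply Rmult_le_pos; apply pow2_ge_0. apply Rlt_le, Rinv_0_lt_compat. lra. }
    assert (p x ^ 2 / (2 * x) + p x * q x + x * q x ^ 2 = (((p x + x * q x)^2 + x^2 * q x ^ 2) / (2 * x))) by (field; lra).
    lra.
Qed.
End Decay.

Lemma J0_decay : exists C, 0 <= C /\ forall x, 1 <= x -> x * J0 x ^ 2 <= C.
Proof.
  destruct (decay pJ qJ (fun x => - 2 * S1 (x^2) - S0 (x^2)) dpJ dqJ) as [C [hC H]].
  - intros x hx. apply dqJ'. lra.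
  - exists C. split; auto. intros x hx. rewrite J0_pJ. auto.
Qed.

Lemma J0_cont x : continuous J0 x.
Proof.
  apply continuous_ext with pJ. intro; symmetry; apply J0_pJ.
  apply continuity_pt_filterlim, derivable_continuous_pt. eexists. apply is_derive_Reals, dpJ.
Qed.


Lemma cont_of_der (f : R -> R) x : ex_derive f x -> continuous f x.
Proof.
  intros [l H]. apply continuity_pt_filterlim, derivable_continuous_pt.
  exists l. apply is_derive_Reals; auto.
Qed.

Lemma cauchy_lim (F : R -> R) :
  (forall eps, 0 < eps -> exists M, forall b1 b2, M <= b1 -> b1 <= b2 -> Rabs (F b2 - F b1) < eps) ->
  exists l, forall eps, 0 < eps -> exists M, forall b, M <= b -> Rabs (F b - l) < eps.
Proof.
  intros HC.
  assert (Hc : Cauchy_crit (fun n => F (INR n))).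
  { intros eps heps. destruct (HC eps heps) as [M HM].
    destruct (INR_unbounded M) as [N HN].
    exists N. intros n m hn hm. unfold R_dist.
    assert (INR N <= INR n) by (apply le_INR; lia).
    assert (INR N <= INR m) by (apply le_INR; lia).
    destruct (Rle_dec (INR n) (INR m)).
    - rewrite Rabs_minus_sym. apply HM; lra.
    - apply HM; lra. }
  destruct (R_complete _ Hc) as [l Hl].
  exists l. intros eps heps.
  destruct (HC (eps/2) ltac:(lra)) as [M HM].
  exists M. intros b hb.
  destruct (Hl (eps/2) ltac:(lra)) as [N1 HN1].
  destruct (INR_unbounded b) as [N2 HN2].
  set (n := max N1 N2).
  assert (INR N2 <= INR n) by (apply le_INR; lia).
  specialize (HN1 n ltac:(lia)). unfold R_dist in HN1.
  specialize (HM b (INR n) hb ltac:(lra)).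
  replace (F b - l) with ((F (INR n) - l) - (F (INR n) - F b)) by ring.
  assert (Rabs (F (INR n) - l - (F (INR n) - F b)) <= Rabs (F (INR n) - l) + Rabs (F (INR n) - F b)).
  { eapply Rle_trans. apply Rabs_triang. rewrite Rabs_Ropp. lra. }
  lra.
Qed.

Lemma improper_from_RInt (f : R -> R) a l :
  (forall x, a <= x -> continuous f x) ->
  (forall eps, 0 < eps -> exists M, forall b, a <= b -> M <= b -> Rabs (RInt f a b - l) < eps) ->
  improper_int f a l.
Proof.
  intros Hc Hl. split.
  - intros b hb. constructor. apply ex_RInt_Reals_0. apply (ex_RInt_continuous (V:=R_CompleteNormedModule)).
    intros z hz. rewrite Rmin_left, Rmax_right in hz by lra. apply Hc; lra.
  - intros eps heps. destruct (Hl eps heps) as [M HM]. exists M.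
    intros b pr hb hM. rewrite <- RInt_Reals. auto.
Qed.


Lemma exRI (f : R -> R) a b : (forall x, continuous f x) -> ex_RInt f a b.
Proof. intros Hc. apply (ex_RInt_continuous (V:=R_CompleteNormedModule)). intros; apply Hc. Qed.

Lemma antider D z : 0 < z -> is_derive (fun z => - 2 * D / sqrt z) z (D / (z * sqrt z)).
Proof.
  intro hz. assert (hs := sqrt_lt_R0 z hz). assert (hss := sqrt_sqrt z (Rlt_le _ _ hz)).
  auto_derive. lra.
  replace (z * sqrt z) with (sqrt z * sqrt z * sqrt z) by (rewrite hss; auto).
  field. lra.
Qed.

Lemma tail_conv (f : R -> R) a (Hc : forall x, continuous f x) Z0 D :
  0 < Z0 -> 0 <= D -> (forall z, Z0 <= z -> Rabs (f z) <= D / (z * sqrt z)) ->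
  exists l, forall eps, 0 < eps -> exists M, forall b, M <= b -> Rabs (RInt f a b - l) < eps.
Proof.
  intros hZ hD Hb. apply cauchy_lim. intros eps heps.
  exists (Rmax Z0 ((2 * D / eps)^2 + 1)). intros b1 b2 h1 h2.
  assert (hz1 : Z0 <= b1) by (eapply Rle_trans; [apply Rmax_l|exact h1]).
  assert (hz2 : (2 * D / eps)^2 + 1 <= b1) by (eapply Rle_trans; [apply Rmax_r|exact h1]).
  assert (E : RInt f a b2 - RInt f a b1 = RInt f b1 b2).
  { rewrite <- (RInt_Chasles f a b1 b2) by (apply exRI; auto). unfold plus; simpl. ring. }
  rewrite E.
  assert (I1 : RInt (fun z => D / (z * sqrt z)) b1 b2 = - 2 * D / sqrt b2 - (- 2 * D / sqrt b1)).
  { apply is_RInt_unique.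
    apply (is_RInt_derive (V:=R_CompleteNormedModule) (fun z => - 2 * D / sqrt z)).
    - intros x hx. rewrite Rmin_left, Rmax_right in hx by lra. apply antider. lra.
    - intros x hx. rewrite Rmin_left, Rmax_right in hx by lra.
      apply cont_of_der. auto_derive. assert (0 < sqrt x) by (apply sqrt_lt_R0; lra).
      repeat split; try lra. apply Rgt_not_eq, Rmult_lt_0_compat; lra. }
  assert (L1 : Rabs (RInt f b1 b2) <= RInt (fun t => Rabs (f t)) b1 b2).
  { apply abs_RInt_le. auto. apply exRI; auto. }
  assert (L2 : RInt (fun t => Rabs (f t)) b1 b2 <= RInt (fun z => D / (z * sqrt z)) b1 b2).
  { apply RInt_le; auto.
    - apply exRI. intro x. apply continuous_Rabs_comp, Hc.
    - apply (ex_RInt_continuous (V:=R_CompleteNormedModule)). intros x hx. rewrite Rmin_left, Rmax_right in hx by lra.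
      apply cont_of_der. auto_derive. assert (0 < sqrt x) by (apply sqrt_lt_R0; lra).
      repeat split; try lra. apply Rgt_not_eq, Rmult_lt_0_compat; lra.
    - intros x hx. apply Hb. lra. }
  assert (hb1 : 0 < b1) by lra.
  assert (hs1 := sqrt_lt_R0 b1 hb1). assert (hs2 : 0 < sqrt b2) by (apply sqrt_lt_R0; lra).
  assert (L3 : - 2 * D / sqrt b2 - (- 2 * D / sqrt b1) <= 2 * D / sqrt b1).
  { assert (0 <= 2 * D / sqrt b2) by (apply Rmult_le_pos; [lra|apply Rlt_le, Rinv_0_lt_compat; lra]).
    unfold Rdiv in *. lra. }
  assert (H : 2 * D / eps < sqrt b1).
  { destruct (Rle_lt_dec (2 * D / eps) 0). lra.
    rewrite <- (sqrt_pow2 (2 * D / eps)) by lra. apply sqrt_lt_1_alt. split. apply pow2_ge_0. lra. }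
  assert (H2 : 2 * D < eps * sqrt b1).
  { replace (2 * D) with (2 * D / eps * eps) by (field; lra). nra. }
  assert (L4 : 2 * D / sqrt b1 < eps).
  { apply Rmult_lt_reg_r with (sqrt b1); auto. replace (2 * D / sqrt b1 * sqrt b1) with (2 * D) by (field; lra). lra. }
  lra.
Qed.


Lemma sq_gt z : Rabs z < sqrt (z^2+1).
Proof.
  rewrite <- sqrt_Rsqr_abs. apply sqrt_lt_1_alt. split. apply Rle_0_sqr. unfold Rsqr; simpl; lra.
Qed.
Lemma spz z : 0 < sqrt (z^2+1) + z.
Proof. pose proof (sq_gt z). pose proof (Rle_abs (-z)). rewrite Rabs_Ropp in *. lra. Qed.
Lemma smz z : 0 < sqrt (z^2+1) - z.
Proof. pose proof (sq_gt z). pose proof (Rle_abs z). lra. Qed.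
Lemma sq_pos z : 0 < sqrt (z^2+1).
Proof. apply sqrt_lt_R0. pose proof (pow2_ge_0 z). lra. Qed.

Section F.
Variables al kd r g : R.
Hypothesis hal : 0 < al.

Definition f1 z := J0 (A_1 al kd r g z) / sqrt (z ^ 2 + 1).
Definition f2 z := J0 (A_2 al kd r g z) / sqrt (z ^ 2 + 1).

Lemma cont_f2 z : continuous f2 z.
Proof.
  unfold f2. apply (continuous_mult (K:=R_AbsRing) (fun z => J0 (A_2 al kd r g z)) (fun z => / sqrt (z^2+1))).
  - apply (continuous_comp (fun z => A_2 al kd r g z) J0). 2: apply J0_cont.
    unfold A_2. apply continuous_sqrt_comp. apply cont_of_der. unfold delta2. auto_derive.
    pose proof (spz z). pose proof (pow2_ge_0 z).
    repeat split; try lra. apply Rgt_not_eq. simpl in *. apply Rmult_lt_0_compat. auto. nra.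
  - apply cont_of_der. auto_derive. pose proof (sq_pos z). pose proof (pow2_ge_0 z).
    simpl in *. repeat split; lra.
Qed.

Lemma cont_f1 z : continuous f1 z.
Proof.
  unfold f1. apply (continuous_mult (K:=R_AbsRing) (fun z => J0 (A_1 al kd r g z)) (fun z => / sqrt (z^2+1))).
  - apply (continuous_comp (fun z => A_1 al kd r g z) J0). 2: apply J0_cont.
    unfold A_1. apply continuous_sqrt_comp. apply cont_of_der. unfold delta1. auto_derive.
    pose proof (smz z). pose proof (pow2_ge_0 z).
    repeat split; try lra. apply Rgt_not_eq. simpl in *. apply Rmult_lt_0_compat. auto. nra.
  - apply cont_of_der. auto_derive. pose proof (sq_pos z). pose proof (pow2_ge_0 z).
    simpl in *. repeat split; lra.
Qed.

Lemma f2_bound : exists Z0 D, 0 < Z0 /\ 0 <= D /\ forall z, Z0 <= z -> Rabs (f2 z) <= D / (z * sqrt z).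
Proof.
  destruct J0_decay as [C [hC HC]].
  set (c := sqrt (2 * al)). assert (hc : 0 < c) by (apply sqrt_lt_R0; lra).
  assert (hsa : 0 < sqrt al) by (apply sqrt_lt_R0; lra).
  exists (1 + Rabs (kd * r) / sqrt al + / c), (sqrt (C / c)).
  assert (h1 : 0 <= Rabs (kd * r) / sqrt al) by (apply Rmult_le_pos; [apply Rabs_pos|apply Rlt_le, Rinv_0_lt_compat; auto]).
  assert (h2 : 0 < / c) by (apply Rinv_0_lt_compat; auto).
  split. lra. split. apply sqrt_pos.
  intros z hz.
  assert (hz1 : 1 <= z) by lra.
  assert (hcz : 1 <= c * z).
  { replace 1 with (c * / c) by (field; lra). apply Rmult_le_compat_l; lra. }
  assert (hkz : Rabs (kd * r) <= sqrt al * z).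
  { assert (Rabs (kd * r) / sqrt al <= z) by lra.
    replace (Rabs (kd * r)) with (sqrt al * (Rabs (kd * r) / sqrt al)) by (field; lra).
    apply Rmult_le_compat_l; lra. }
  set (w := sqrt (z^2+1)).
  assert (hw : z <= w) by (pose proof (sq_gt z); pose proof (Rle_abs z); unfold w; lra).
  assert (hal2 : sqrt al * sqrt al = al) by (apply sqrt_sqrt; lra).
  assert (hc2 : c * c = 2 * al) by (apply sqrt_sqrt; lra).
  assert (hd : 1/2 <= delta2 al kd r z).
  { unfold delta2. fold w.
    assert (hk2 : (kd * r)^2 <= al * z^2).
    { assert ((kd*r)^2 = Rabs (kd*r)^2) by (rewrite pow2_abs; auto).
      assert (Rabs(kd*r)^2 <= (sqrt al * z)^2) by (apply pow_incr; split; [apply Rabs_pos|auto]).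
      assert ((sqrt al*z)^2 = al*z^2) by (rewrite Rpow_mult_distr, pow2_sqrt by lra; auto). lra. }
    assert (hw2 : 4 * z^2 <= (w + z)^2) by nra.
    assert (0 < al * (w + z)^2) by nra.
    assert (kd ^ 2 * r ^ 2 / (al * (w + z) ^ 2) <= 1/2).
    { apply Rmult_le_reg_r with (al * (w + z)^2); auto.
      replace (kd ^ 2 * r ^ 2 / (al * (w + z) ^ 2) * (al * (w + z) ^ 2)) with ((kd*r)^2) by (field; lra).
      nra. }
    lra. }
  set (A := A_2 al kd r g z).
  assert (hA : c * z <= A).
  { unfold A, A_2. rewrite <- (sqrt_pow2 (c * z)) by lra. apply sqrt_le_1_alt.
    replace ((c * z)^2) with (2 * al * z ^2) by (unfold c; rewrite Rpow_mult_distr, pow2_sqrt by lra; auto).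
    pose proof (pow2_ge_0 g). pose proof (pow2_ge_0 z).
    assert (0 <= (delta2 al kd r z - 1/2)*(z^2+g^2)) by (apply Rmult_le_pos; lra).
    assert (z^2 <= 2 * delta2 al kd r z * (z^2+g^2)) by nra.
    replace (4 * al * delta2 al kd r z * (z ^ 2 + g ^ 2)) with (2 * al * (2 * delta2 al kd r z * (z^2+g^2))) by ring.
    apply Rmult_le_compat_l; lra. }
  assert (HJ := HC A ltac:(lra)).
  unfold f2. fold A w.
  set (j := J0 A).
  fold j in HJ.
  assert (hsz : 0 < sqrt z) by (apply sqrt_lt_R0; lra).
  assert (hszz : sqrt z * sqrt z = z) by (apply sqrt_sqrt; lra).
  assert (hsC : sqrt (C / c) * sqrt (C / c) = C / c).
  { apply sqrt_sqrt. apply Rmult_le_pos; auto. apply Rlt_le, Rinv_0_lt_compat; auto. }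
  assert (hB : 0 <= sqrt (C / c) / (z * sqrt z)).
  { apply Rmult_le_pos. apply sqrt_pos. apply Rlt_le, Rinv_0_lt_compat. nra. }
  rewrite <- (Rabs_right (sqrt (C / c) / (z * sqrt z))) by lra.
  apply Rsqr_le_abs_0. unfold Rsqr.
  replace (sqrt (C / c) / (z * sqrt z) * (sqrt (C / c) / (z * sqrt z))) with (C / (c * z) / z ^ 2)
    by (replace (sqrt (C / c) / (z * sqrt z) * (sqrt (C / c) / (z * sqrt z))) with
          (sqrt (C / c) * sqrt (C / c) / (z * z * (sqrt z * sqrt z))) by (field; nra);
        rewrite hsC, hszz; field; nra).
  replace (j / w * (j / w)) with (j ^ 2 / w ^ 2) by (field; lra).
  assert (j ^ 2 <= C / (c * z)).
  { apply Rmult_le_reg_r with (c * z). lra.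
    replace (C / (c * z) * (c * z)) with C by (field; lra). 
    assert (0 <= j ^ 2) by apply pow2_ge_0. nra. }
  unfold Rdiv. apply Rmult_le_compat; try apply pow2_ge_0; auto.
  apply Rlt_le, Rinv_0_lt_compat; nra.
  apply Rinv_le_contravar; nra.
Qed.
End F.


Section Sub.
Variables beta kd t r phi : R.
Hypothesis hbeta : 0 < beta.
Hypothesis hkd : 0 < kd.
Hypothesis ht : 0 < t.
Hypothesis hr : 0 < r.

Let al := beta * r * t.
Let g := cos (phi / 2).
Let x := r * cos phi.
Let y := r * sin phi.

Lemma hal : 0 < al.
Proof. unfold al. apply Rmult_lt_0_compat; [apply Rmult_lt_0_compat|]; auto. Qed.

Lemma hK k : 0 < k ^ 2 + kd ^ 2.
Proof. pose proof (pow2_ge_0 k). pose proof (pow_lt kd 2 hkd). lra. Qed.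

Definition sk k := r * sqrt (k ^ 2 + kd ^ 2) / sqrt al.
Definition ph k := (sk k - / sk k) / 2.
Definition dph k := k / (k ^ 2 + kd ^ 2) * ((sk k + / sk k) / 2).

Lemma sk_pos k : 0 < sk k.
Proof.
  unfold sk. pose proof (hK k). pose proof hal.
  apply Rmult_lt_0_compat. apply Rmult_lt_0_compat; auto. apply sqrt_lt_R0; auto.
  apply Rinv_0_lt_compat, sqrt_lt_R0; auto.
Qed.

Lemma sk2 k : sk k ^ 2 = r ^ 2 * (k ^ 2 + kd ^ 2) / al.
Proof.
  unfold sk. pose proof (hK k). pose proof hal.
  unfold Rdiv. rewrite !Rpow_mult_distr. rewrite <- Rinv_pow. rewrite !pow2_sqrt by lra. auto.
  apply Rgt_not_eq, sqrt_lt_R0; auto.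
Qed.

Lemma sq_ph k : sqrt (ph k ^ 2 + 1) = (sk k + / sk k) / 2.
Proof.
  pose proof (sk_pos k). rewrite <- (sqrt_pow2 ((sk k + / sk k) / 2)).
  f_equal. unfold ph. field. lra.
  assert (0 < / sk k) by (apply Rinv_0_lt_compat; auto). lra.
Qed.

Lemma sq_ph_plus k : sqrt (ph k ^ 2 + 1) + ph k = sk k.
Proof. rewrite sq_ph. unfold ph. field. pose proof (sk_pos k). lra. Qed.

Lemma deriv_ph k : is_derive ph k (dph k).
Proof.
  pose proof (hK k). pose proof hal. pose proof (sk_pos k).
  assert (hu : 0 < sqrt (k ^ 2 + kd ^ 2)) by (apply sqrt_lt_R0; auto).
  assert (hu2 : sqrt (k ^ 2 + kd ^ 2) * sqrt (k ^ 2 + kd ^ 2) = k ^ 2 + kd ^ 2) by (apply sqrt_sqrt; lra).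
  assert (ha : 0 < sqrt al) by (apply sqrt_lt_R0; auto).
  unfold ph, dph, sk. auto_derive.
  - simpl in *. repeat split; try lra. apply Rgt_not_eq.
    apply Rmult_lt_0_compat. apply Rmult_lt_0_compat; auto.
    apply Rinv_0_lt_compat; auto.
  - simpl in *. set (u := sqrt (k * (k * 1) + kd * (kd * 1))) in *.
    replace (k * (k * 1) + kd * (kd * 1)) with (u * u) by auto.
    field. lra.
Qed.

Lemma A2_ph k : A_2 al kd r g (ph k) = sqrt ((k * x + beta * k * t / (k ^ 2 + kd ^ 2)) ^ 2 + k ^ 2 * y ^ 2).
Proof.
  unfold A_2. f_equal. unfold delta2. rewrite sq_ph_plus.
  pose proof (hK k). pose proof hal. pose proof (sk_pos k).
  assert (hg : g ^ 2 = (1 + cos phi) / 2).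
  { unfold g. replace (cos phi) with (cos (2 * (phi / 2))) by (f_equal; field). rewrite cos_2a_cos. simpl. field. }
  assert (hsc : sin phi ^ 2 = 1 - cos phi ^ 2).
  { pose proof (sin2_cos2 phi). unfold Rsqr in H2. simpl. lra. }
  unfold ph. rewrite hg.
  replace (((sk k - / sk k) / 2) ^ 2) with ((sk k ^ 2 + / (sk k ^ 2) - 2) / 4) by (field; lra).
  rewrite sk2. unfold x, y. rewrite Rpow_mult_distr with (x := r) (y := sin phi). rewrite hsc.
  unfold al. field. repeat split; try lra.
Qed.

Lemma integrand_eq k : dph k * f2 al kd r g (ph k) = psiG_integrand beta kd t x y k.
Proof.
  unfold f2, psiG_integrand, dph. rewrite A2_ph, sq_ph.
  pose proof (hK k). pose proof (sk_pos k).
  assert (0 < / sk k) by (apply Rinv_0_lt_compat; auto).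
  field. repeat split; try lra. nra.
Qed.

Lemma ph0 : ph 0 = (kd ^ 2 * r ^ 2 - al) / (sqrt (4 * al) * kd * r).
Proof.
  pose proof hal.
  assert (ha : 0 < sqrt al) by (apply sqrt_lt_R0; auto).
  assert (ha2 : sqrt al * sqrt al = al) by (apply sqrt_sqrt; lra).
  rewrite sqrt_mult by lra. replace (sqrt 4) with 2 by (replace 4 with (2^2) by ring; rewrite sqrt_pow2; lra).
  unfold ph, sk. replace (0 ^ 2 + kd ^ 2) with (kd ^ 2) by ring. rewrite sqrt_pow2 by lra.
  replace (kd ^ 2 * r ^ 2 - al) with (kd ^ 2 * r ^ 2 - sqrt al * sqrt al) by (rewrite ha2; auto). field. split; lra.
Qed.

Lemma ph_grow M : exists B, forall b, B <= b -> M <= ph b.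
Proof.
  pose proof hal. pose proof (sk_pos 0).
  assert (ha : 0 < sqrt al) by (apply sqrt_lt_R0; auto).
  exists (Rmax 0 ((2 * M + / sk 0) * sqrt al / r)). intros b hb.
  assert (hb0 : 0 <= b) by (eapply Rle_trans; [apply Rmax_l|exact hb]).
  assert (hb1 : (2 * M + / sk 0) * sqrt al / r <= b) by (eapply Rle_trans; [apply Rmax_r|exact hb]).
  assert (h1 : r * b / sqrt al <= sk b).
  { unfold sk. unfold Rdiv. apply Rmult_le_compat_r. apply Rlt_le, Rinv_0_lt_compat; auto.
    apply Rmult_le_compat_l. lra. rewrite <- (sqrt_pow2 b) at 1 by auto. apply sqrt_le_1_alt.
    pose proof (pow2_ge_0 kd). lra. }
  assert (h2 : sk 0 <= sk b).
  { unfold sk. unfold Rdiv. apply Rmult_le_compat_r. apply Rlt_le, Rinv_0_lt_compat; auto.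
    apply Rmult_le_compat_l. lra. apply sqrt_le_1_alt. pose proof (pow2_ge_0 b). simpl. lra. }
  assert (h3 : 2 * M + / sk 0 <= r * b / sqrt al).
  { replace (2 * M + / sk 0) with (((2 * M + / sk 0) * sqrt al / r) * r / sqrt al) by (field; lra).
    unfold Rdiv. apply Rmult_le_compat_r. apply Rlt_le, Rinv_0_lt_compat; auto.
    rewrite (Rmult_comm r b). apply Rmult_le_compat_r; lra. }
  assert (h4 : / sk b <= / sk 0) by (apply Rinv_le_contravar; auto).
  unfold ph. lra.
Qed.
End Sub.


Lemma cont_dph beta kd t r (hbeta : 0 < beta) (hkd : 0 < kd) (ht : 0 < t) (hr : 0 < r) k :
  continuous (dph beta kd t r) k.
Proof.
  pose proof (hK kd hkd k). pose proof (hal beta t r hbeta ht hr). pose proof (sk_pos beta kd t r hbeta hkd ht hr k).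
  assert (hu : 0 < sqrt (k ^ 2 + kd ^ 2)) by (apply sqrt_lt_R0; auto).
  assert (ha : 0 < sqrt (beta * r * t)) by (apply sqrt_lt_R0; auto).
  apply cont_of_der. unfold dph, sk. auto_derive.
  simpl in *. repeat split; try lra. apply Rgt_not_eq.
  apply Rmult_lt_0_compat. apply Rmult_lt_0_compat; auto.
  apply Rinv_0_lt_compat; auto.
Qed.

Lemma dopp z : is_derive (fun y : R => - y) z (-1).
Proof. auto_derive. auto. ring. Qed.

Lemma reflect al kd r g a (hal : 0 < al) :
  RInt (f1 al kd r g) 0 a = RInt (f2 al kd r g) (-a) 0.
Proof.
  assert (E : forall y, f1 al kd r g y = f2 al kd r g (- y)).
  { intro z. unfold f1, f2, A_1, A_2, delta1, delta2.
    assert (H : (- z) ^ 2 = z ^ 2) by ring. rewrite H.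
    assert (H2 : sqrt (z ^ 2 + 1) + - z = sqrt (z ^ 2 + 1) - z) by ring. rewrite H2. reflexivity. }
  assert (C := RInt_comp (V:=R_CompleteNormedModule) (f2 al kd r g) (fun y => - y) (fun _ => -1) 0 a).
  cbv beta in C. rewrite Ropp_0 in C.
  assert (C' : RInt (fun y => scal (-1) (f2 al kd r g (- y))) 0 a = RInt (f2 al kd r g) 0 (- a)).
  { apply C. intros; apply cont_f2; auto.
    intros z _. split. apply dopp. apply continuous_const. }
  pose proof (opp_RInt_swap (V:=R_CompleteNormedModule) (f2 al kd r g) 0 (-a) (exRI _ _ _ (cont_f2 al kd r g hal))) as S.
  pose proof (RInt_opp (V:=R_CompleteNormedModule) (f1 al kd r g) 0 a (exRI _ _ _ (cont_f1 al kd r g hal))) as O.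
  assert (X : RInt (fun y => scal (-1) (f2 al kd r g (- y))) 0 a = RInt (fun y => @opp R_CompleteNormedModule (f1 al kd r g y)) 0 a).
  { apply RInt_ext. intros z _. rewrite E. set (v := f2 al kd r g (- z)). clearbody v. unfold scal, opp; simpl. unfold mult; simpl. ring. }
  rewrite <- S, <- C', X, O, opp_opp. reflexivity.
Qed.

Lemma key beta kd t r phi (hbeta : 0 < beta) (hkd : 0 < kd) (ht : 0 < t) (hr : 0 < r) :
  exists I,
    improper_int (psiG_integrand beta kd t (r * cos phi) (r * sin phi)) 0 I /\
    improper_int (f2 (beta * r * t) kd r (cos (phi / 2))) (ph beta kd t r 0) I /\
    (forall eps, 0 < eps -> exists M, forall b, M <= b ->
       Rabs (RInt (f2 (beta * r * t) kd r (cos (phi / 2))) (ph beta kd t r 0) b - I) < eps).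
Proof.
  pose proof (hal beta t r hbeta ht hr) as hal.
  set (F := f2 (beta * r * t) kd r (cos (phi / 2))).
  assert (HF : forall z, continuous F z) by (intro; apply cont_f2; auto).
  destruct (f2_bound (beta * r * t) kd r (cos (phi / 2)) hal) as [Z0 [D [hZ [hD Hb]]]].
  destruct (tail_conv F (ph beta kd t r 0) HF Z0 D hZ hD Hb) as [I HI].
  exists I. split; [|split; auto].
  - assert (Hcomp : forall b, RInt (psiG_integrand beta kd t (r * cos phi) (r * sin phi)) 0 b =
                     RInt F (ph beta kd t r 0) (ph beta kd t r b)).
    { intro b. rewrite <- (RInt_comp (V:=R_CompleteNormedModule) F (ph beta kd t r) (dph beta kd t r)).
      - apply RInt_ext. intros z _. rewrite <- integrand_eq by auto. reflexivity.
      - intros; apply HF.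
      - intros z _. split. apply deriv_ph; auto. apply cont_dph; auto. }
    apply improper_from_RInt.
    + intros k _. apply continuous_ext with (fun k => dph beta kd t r k * F (ph beta kd t r k)).
      intro; apply integrand_eq; auto.
      apply (continuous_mult (K:=R_AbsRing) (dph beta kd t r) (fun k => F (ph beta kd t r k))).
      apply cont_dph; auto. apply (continuous_comp (ph beta kd t r) F). 
      apply cont_of_der. eexists; apply deriv_ph; auto. apply HF.
    + intros eps heps. destruct (HI eps heps) as [M HM].
      destruct (ph_grow beta kd t r hbeta hkd ht hr M) as [B HB].
      exists B. intros b _ hb. rewrite Hcomp. apply HM. apply HB. auto.
  - apply improper_from_RInt; auto.
    intros eps heps. destruct (HI eps heps) as [M HM]. exists M. intros b _ hb. auto.
Qed.


Theorem proposition3p3 (beta kd N t r phi : R)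
  (hbeta : 0 < beta) (hkd : 0 < kd) (ht : 0 < t) (hr : 0 < r) :
  let x := r * cos phi in
  let y := r * sin phi in
  let alpha := beta * r * t in
  let gamma := cos (phi / 2) in
  let f1 := fun z : R => J0 (A_1 alpha kd r gamma z) / sqrt (z ^ 2 + 1) in
  let f2 := fun z : R => J0 (A_2 alpha kd r gamma z) / sqrt (z ^ 2 + 1) in
  (* (i) near region *)
  (r < beta * t / kd ^ 2 ->
   let z01 := (alpha - kd ^ 2 * r ^ 2) / (sqrt (4 * alpha) * kd * r) in
   0 < z01 /\
   exists psi I1 I2 I3,
     psiG_value beta kd N t x y psi /\
     (exists pr : Riemann_integrable f1 0 z01, RiemannInt pr = I1) /\
     improper_int f2 0 I2 /\
     improper_int f2 (- z01) I3 /\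
     psi = - (N / (2 * PI)) * (I1 + I2) /\
     psi = - (N / (2 * PI)) * I3) /\
  (* (ii) far region *)
  (beta * t / kd ^ 2 < r ->
   let z02 := (kd ^ 2 * r ^ 2 - alpha) / (sqrt (4 * alpha) * kd * r) in
   0 < z02 /\
   exists psi I,
     psiG_value beta kd N t x y psi /\
     improper_int f2 z02 I /\
     psi = - (N / (2 * PI)) * I).
Proof.
  intros x0 y0 alpha gamma F1 F2.
  pose proof (hal beta t r hbeta ht hr) as hal.
  destruct (key beta kd t r phi hbeta hkd ht hr) as [I [Hpsi [Hf2 HI]]].
  assert (hs4 : 0 < sqrt (4 * alpha)) by (apply sqrt_lt_R0; unfold alpha; lra).
  assert (hden : 0 < sqrt (4 * alpha) * kd * r) by (apply Rmult_lt_0_compat; [apply Rmult_lt_0_compat|]; auto).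
  pose proof (ph0 beta kd t r hbeta hkd ht hr) as E0.
  assert (hkd2 : 0 < kd ^ 2) by (apply pow_lt; auto).
  split.
  - intros Hn z01.
    assert (hz : 0 < z01).
    { unfold z01. apply Rdiv_lt_0_compat; auto. unfold alpha.
      apply Rmult_lt_compat_r with (r := kd ^ 2) in Hn; auto.
      replace (beta * t / kd ^ 2 * kd ^ 2) with (beta * t) in Hn by (field; lra).
      assert (r * (kd ^ 2 * r) < r * (beta * t)) by (apply Rmult_lt_compat_l; lra).
      assert (kd^2*r^2 = r*(kd^2*r)) by ring. assert (beta*r*t = r*(beta*t)) by ring. lra. }
    assert (Hz : ph beta kd t r 0 = - z01).
    { rewrite E0. unfold z01. unfold Rdiv. rewrite Ropp_mult_distr_l. f_equal. unfold alpha; ring. }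
    rewrite Hz in Hf2, HI.
    set (I1 := RInt (f1 alpha kd r gamma) 0 z01).
    assert (HI1 : I1 = RInt (f2 alpha kd r gamma) (- z01) 0) by (apply reflect; auto).
    split; [exact hz|].
    exists (- (N / (2 * PI)) * I), I1, (I - I1), I.
    split; [|split; [|split; [|split; [|split]]]].
    + exists I. split; auto.
    + exists (ex_RInt_Reals_0 _ _ _ (exRI _ 0 z01 (cont_f1 alpha kd r gamma hal))).
      rewrite <- RInt_Reals. reflexivity.
    + apply improper_from_RInt.
      * intros; apply cont_f2; auto.
      * intros eps heps. destruct (HI eps heps) as [M HM]. exists M. intros b _ hb.
        change F2 with (f2 alpha kd r gamma). rewrite HI1.
        specialize (HM b hb).
        change (f2 (beta * r * t) kd r (cos (phi / 2))) with (f2 alpha kd r gamma) in HM.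
        assert (C : RInt (f2 alpha kd r gamma) (- z01) b = RInt (f2 alpha kd r gamma) (- z01) 0 + RInt (f2 alpha kd r gamma) 0 b).
        { symmetry. apply (RInt_Chasles (V:=R_CompleteNormedModule)); apply exRI; intro; apply cont_f2; auto. }
        rewrite C in HM.
        replace (RInt (f2 alpha kd r gamma) 0 b - (I - RInt (f2 alpha kd r gamma) (- z01) 0))
          with (RInt (f2 alpha kd r gamma) (- z01) 0 + RInt (f2 alpha kd r gamma) 0 b - I) by ring.
        exact HM.
    + exact Hf2.
    + ring.
    + reflexivity.
  - intros Hf z02.
    assert (hz : 0 < z02).
    { unfold z02. apply Rdiv_lt_0_compat; auto. unfold alpha.
      apply Rmult_lt_compat_r with (r := kd ^ 2) in Hf; auto.
      replace (beta * t / kd ^ 2 * kd ^ 2) with (beta * t) in Hf by (field; lra).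
      assert (r * (beta * t) < r * (r * kd ^ 2)) by (apply Rmult_lt_compat_l; lra).
      assert (kd^2*r^2 = r*(r*kd^2)) by ring. assert (beta*r*t = r*(beta*t)) by ring. lra. }
    assert (Hz : ph beta kd t r 0 = z02) by (rewrite E0; reflexivity).
    rewrite Hz in Hf2.
    split; [exact hz|].
    exists (- (N / (2 * PI)) * I), I. split; [|split; auto].
    exists I. split; auto.
Qed.
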